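(* Let $\zeta$ be a nonconstant (holomorphic or formal) curve with $\zeta(0)=0$, let $\nu=\nu(\zeta)$ and let $k\geq 1$ be an integer. If $j_{2k\nu}(\zeta^*r)=0$, then there is a unitary infinite matrix $U_k\in\mathcal M_1$ (indeed $U_k\in\mathcal M_{1,N}$ for some $N$) such that $j_{2k\nu}(\zeta^*h)=0$ and $j_{k\nu}(\zeta^*(f-U_kg))=0$ (componentwise).
   Context: $r$ is a real $\mathcal C^\infty$ defining function of a hypersurface through $0\in\mathbb C^n$ ($r(0)=0$, $dr(0)\ne0$). Order the nonzero multi-indices $J\in\mathbb N^n$ by $J<K$ iff $|J|<|K|$, or $|J|=|K|$ and $J$ precedes $K$ lexicographically; enumerate them increasingly as $J^{(1)},J^{(2)},\dots$. Write the formal Taylor series of $r$ at $0$ as $r\sim 2\,\mathrm{Re}\,h+4\,\mathrm{Re}\sum_{J}\sum_{K\ge J}a_{JK}z^J\bar z^K$ ($J,K$ nonzero), with $h$ a formal holomorphic power series, $h(0)=0$, $a_{JK}\in\mathbb C$. Set $f_J=z^J+\sum_{K\ge J}\overline{a_{JK}}z^K$, $g_J=z^J-\sum_{K\ge J}\overline{a_{JK}}z^K$; then formally $r\sim 2\,\mathrm{Re}\,h+\sum_J|f_J|^2-\sum_J|g_J|^2$, and $f=(f_{J^{(m)}})_{m\ge1}$, $g=(g_{J^{(m)}})_{m\ge1}$ are viewed as infinite column vectors. For a formal power series $\varphi$ in $t,\bar t$ (or in $t$), $j_m(\varphi)$ is its truncation to terms of total degree $\le m$; $\zeta^*\varphi=\varphi\circ\zeta$.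 $\nu(\zeta)$ is the order of vanishing of $\zeta$ at $0$. $\mathcal M$ is the set of infinite complex matrices $\{a_{ij}\}_{i,j\ge1}$, products defined by $c_{i\ell}=\sum_k a_{ik}b_{k\ell}$ when convergent; $A^*=\{\overline{a_{ji}}\}$; $\mathcal M_1$ is the set of unitary ones ($AA^*=A^*A=I$); $\mathcal M_{1,N}\subset\mathcal M_1$ consists of those with $a_{ij}=\delta_{ij}$ whenever $\max\{i,j\}>N$. For $U\in\mathcal M_1$, $(Ug)_i=\sum_m U_{im}g_m$. *)

(* Defs.v *)
From HB Require Import structures.
From mathcomp Require Import all_boot all_order all_algebra.
Set Implicit Arguments. Unset Strict Implicit. Unset Printing Implicit Defensive.
Import Order.TTheory GRing.Theory Num.Theory.
Local Open Scope ring_scope.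

(* Multi-indices in N^n are represented as lists of naturals of length n. *)

Fixpoint deg_list (n d : nat) : seq (seq nat) :=
  match n with
  | 0 => if d == 0%N then [:: [::]] else [::]
  | n'.+1 => flatten [seq [seq a :: s | s <- deg_list n' (d - a)] | a <- iota 0 d.+1]
  end.

Definition mi_upto (n p : nat) : seq (seq nat) :=
  flatten [seq deg_list n d | d <- iota 0 p.+1].

Fixpoint lex_le (s t : seq nat) : bool :=
  match s, t with
  | [::], _ => true
  | _ :: _, [::] => false
  | x :: s', y :: t' => (x < y)%N || ((x == y) && lex_le s' t')
  end.

Definition mi_le (J K : seq nat) : bool :=
  (sumn J < sumn K)%N || ((sumn J == sumn K) && lex_le J K).

(** Enumeration of the nonzero multi-indices in increasing order.
    0-based: [mi_enum n m] is J^(m+1) of the paper (for n >= 1). *)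
Definition mi_enum (n m : nat) : seq nat :=
  nth [::] (flatten [seq deg_list n d | d <- iota 1 m.+1]) m.

Section Series.
Variable C : numClosedFieldType.

(** Formal power series in one variable t: coefficient functions nat -> C. *)
Definition sone : nat -> C := fun p => (p == 0%N)%:R.
Definition smul (f g : nat -> C) : nat -> C :=
  fun p => \sum_(i < p.+1) f i * g (p - i)%N.
Definition spow (f : nat -> C) (e : nat) : nat -> C := iter e (smul f) sone.

Variable n : nat.

Definition zpow (zeta : 'I_n -> nat -> C) (J : seq nat) : nat -> C :=
  \big[smul/sone]_(i < n) spow (zeta i) (nth 0%N J i).

(** Pullback zeta^* F of a formal holomorphic series F = sum_K F K z^K,
    coefficient of t^p.  Since zeta(0) = 0, zeta^K has order >= |K|, so only
    |K| <= p contributes. *)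
Definition pull1 (zeta : 'I_n -> nat -> C) (F : seq nat -> C) (p : nat) : C :=
  \sum_(K <- mi_upto n p) F K * zpow zeta K p.

(** Pullback zeta^* R of a formal series R = sum_{J,K} R J K z^J zbar^K,
    coefficient of t^p tbar^q. *)
Definition pull2 (zeta : 'I_n -> nat -> C) (R : seq nat -> seq nat -> C)
    (p q : nat) : C :=
  \sum_(J <- mi_upto n p) \sum_(K <- mi_upto n q)
     R J K * zpow zeta J p * (zpow zeta K q)^*.

(** The formal Taylor series of r:
    r ~ 2 Re h + 4 Re sum_{J nonzero} sum_{K >= J} a_{JK} z^J zbar^K.
    Coefficient of z^J zbar^K. *)
Definition rser (h : seq nat -> C) (a : seq nat -> seq nat -> C)
    (J K : seq nat) : C :=
  (if sumn K == 0%N then h J else 0)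
  + (if sumn J == 0%N then (h K)^* else 0)
  + (if (sumn J != 0%N) && (sumn K != 0%N) then
       2%:R * (if mi_le J K then a J K else 0)
       + 2%:R * (if mi_le K J then (a K J)^* else 0)
     else 0).

Definition fser (a : seq nat -> seq nat -> C) (J K : seq nat) : C :=
  (K == J)%:R + (if mi_le J K then (a J K)^* else 0).

Definition gser (a : seq nat -> seq nat -> C) (J K : seq nat) : C :=
  (K == J)%:R - (if mi_le J K then (a J K)^* else 0).

(** Infinite matrices (0-based indices: entry (i,j) is a_{i+1,j+1} of the paper). *)
Definition inf_matrix := nat -> nat -> C.

(** U is in M_{1,N}: a_{ij} = delta_{ij} whenever max(i,j) > N (1-based),
    and U is unitary: U U^* = U^* U = I.  For such U all the (infinite) sums
    in the products have only the terms with index < max(N, i+1, l+1), so the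
    sums below are the full products. *)
Definition in_M1N (N : nat) (U : inf_matrix) : Prop :=
  (forall i j, (N <= maxn i j)%N -> U i j = (i == j)%:R)
  /\ (forall i l, \sum_(m < maxn N (maxn i l).+1) U i m * (U l m)^* = (i == l)%:R)
  /\ (forall i l, \sum_(m < maxn N (maxn i l).+1) (U m i)^* * U m l = (i == l)%:R).

(** (f - U g)_i (0-based i), as a formal holomorphic series; for U in M_{1,N}
    the sum (Ug)_i = sum_m U_{im} g_m has nonzero terms only for m < max(N,i+1). *)
Definition fUg (a : seq nat -> seq nat -> C) (N : nat) (U : inf_matrix)
    (i : nat) (K : seq nat) : C :=
  fser a (mi_enum n i) K
  - \sum_(m < maxn N i.+1) U i m * gser a (mi_enum n m) K.

Definition vanishing_order (zeta : 'I_n -> nat -> C) (nu : nat) : Prop :=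
  (exists i : 'I_n, zeta i nu != 0) /\ (forall (i : 'I_n) p, (p < nu)%N -> zeta i p = 0).

End Series.

(* Main.v *)
Require Import Defs.
From HB Require Import structures.
From mathcomp Require Import all_boot all_order all_algebra.
Set Implicit Arguments. Unset Strict Implicit. Unset Printing Implicit Defensive.
Import Order.TTheory GRing.Theory Num.Theory.
Local Open Scope ring_scope.

Section S1.
Variable C : numClosedFieldType.

Definition vb (f : nat -> C) (m : nat) := forall p, (p < m)%N -> f p = 0.

Lemma smul_vb f g a b : vb f a -> vb g b -> vb (smul f g) (a + b).
Proof.
move=> Hf Hg p Hp; rewrite /smul big1 // => i _.
case: (ltnP i a) => Hi; first by rewrite Hf ?mul0r.
rewrite Hg ?mulr0 //.
have Hip : (i <= p)%N by rewrite -ltnS ltn_ord.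
by rewrite ltn_subLR // (leq_trans Hp) // leq_add2r.
Qed.

Lemma spow_vb f nu e : vb f nu -> vb (spow f e) (e * nu).
Proof.
move=> Hf; elim: e => [|e IH] /=; first by move=> p.
rewrite mulSn; exact: (smul_vb Hf IH).
Qed.

Lemma bigsmul_vb m (F : 'I_m -> nat -> C) (e : 'I_m -> nat) :
  (forall i, vb (F i) (e i)) -> vb (\big[@smul C/@sone C]_(i < m) F i) (\sum_(i < m) e i).
Proof.
elim: m F e => [|m IH] F e H; first by move=> p; rewrite !big_ord0.
rewrite big_ord_recl [X in vb _ X]big_ord_recl; apply: smul_vb => //.
by apply: IH => i; apply: H.
Qed.

Lemma sone_smul (f : nat -> C) p : smul (@sone C) f p = f p.
Proof.
rewrite /smul big_ord_recl /sone /= mul1r subn0 big1 ?addr0 // => i _.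
by rewrite mul0r.
Qed.

Lemma bigsmul_sone m p : (\big[@smul C/@sone C]_(i < m) @sone C) p = @sone C p.
Proof.
elim: m p => [|m IH] p; first by rewrite big_ord0.
by rewrite big_ord_recl sone_smul IH.
Qed.

Lemma sumn_nth n (J : seq nat) : size J = n -> (\sum_(i < n) nth 0%N J i)%N = sumn J.
Proof.
move=> <-; rewrite sumnE (big_nth 0%N) big_mkord //.
Qed.

Variable n : nat.

Lemma zpow_vb (zeta : 'I_n -> nat -> C) nu J :
  (forall i, vb (zeta i) nu) -> size J = n -> vb (zpow zeta J) (sumn J * nu).
Proof.
move=> Hz HJ; rewrite /zpow -(sumn_nth HJ) big_distrl /=.
by apply: bigsmul_vb => i; apply: spow_vb.
Qed.

Lemma zpow0 (zeta : 'I_n -> nat -> C) p : zpow zeta (nseq n 0%N) p = @sone C p.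
Proof.
rewrite /zpow -(bigsmul_sone n p); congr (_ p); apply: eq_bigr => i _.
by rewrite nth_nseq if_same.
Qed.
End S1.

Lemma dl_mem n d J : J \in deg_list n d -> size J = n /\ sumn J = d.
Proof.
elim: n d J => [|n IH] d J.
  by rewrite /=; case: (d =P 0%N) => // -> ; rewrite inE => /eqP ->.
move/flatten_mapP => [a]; rewrite mem_iota add0n ltnS => Ha /mapP [s Hs ->].
by have [<- Hsum] := IH _ _ Hs; rewrite /= Hsum subnKC.
Qed.

Lemma dl0 n : deg_list n 0 = [:: nseq n 0%N].
Proof. by elim: n => [|n IH] //=; rewrite IH. Qed.

Lemma sumn_iota_eq m l x (g : nat -> nat) :
  sumn [seq ((a == x) * g a)%N | a <- iota m l] = ((m <= x < m + l) * g x)%N.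
Proof.
elim: l m => [|l IH] m /=.
  by rewrite addn0; case: leqP => //= H; rewrite ltnNge H.
rewrite IH addSnnS; case: (eqVneq m x) => [->|Hne] /=.
  by rewrite ltnn leqnn /= mul1n mul0n addn0 addnS ltnS leq_addr mul1n.
rewrite mul0n add0n; congr (_ * _)%N; congr (_ && _).
by rewrite ltn_neqAle Hne.
Qed.

Lemma dl_count n d J : size J = n -> count_mem J (deg_list n d) = (d == sumn J).
Proof.
elim: n d J => [|n IH] d J.
  by move/size0nil => -> /=; case: (d == 0%N).
case: J => [//|x s] [Hs]; rewrite count_flatten -map_comp.
rewrite (eq_map (g := fun a => ((a == x) * ((d - a) == sumn s))%N)); last first.
  move=> a; change (count_mem (x :: s) (map (cons a) (deg_list n (d - a))) = ((a == x) * ((d - a) == sumn s))%N); rewrite count_map.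
  case: (eqVneq a x) => [->|Hne] /=.
    rewrite mul1n -(IH _ _ Hs); apply: eq_count => t.
    by rewrite /preim /= eqseq_cons eqxx.
  rewrite mul0n (eq_count (a2 := pred0)) ?count_pred0 // => t.
  by rewrite /preim /= eqseq_cons (negbTE Hne).
rewrite sumn_iota_eq add0n ltnS.
case: (leqP x d) => Hx /=.
  by rewrite mul1n -(eqn_add2l x) subnKC.
rewrite mul0n; case: eqP => [H|//].
by move: Hx; rewrite H ltnNge leq_addr.
Qed.

Lemma dl_nonempty n d : (0 < n)%N -> (0 < size (deg_list n d))%N.
Proof.
case: n => // n _.
have := @dl_count n.+1 d (d :: nseq n 0%N); rewrite /= size_nseq => /(_ erefl).
have -> : sumn (nseq n 0%N) = 0%N by elim: n.
rewrite addn0 eqxx => H; apply: leq_trans (count_size (pred1 (d :: nseq n 0%N)) _).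
by rewrite H.
Qed.
Section S2sec.
Local Open Scope nat_scope.

Definition Lk n M := flatten [seq deg_list n d | d <- iota 1 M].

Lemma mem_fl n a l J : J \in flatten [seq deg_list n d | d <- iota a l] ->
  size J = n /\ a <= sumn J < a + l.
Proof.
by move/flatten_mapP => [d]; rewrite mem_iota => Hd /dl_mem [-> ->].
Qed.

Lemma Lk_cat n M1 M2 : Lk n (M1 + M2) = Lk n M1 ++ flatten [seq deg_list n d | d <- iota M1.+1 M2].
Proof. by rewrite /Lk iotaD map_cat flatten_cat add1n. Qed.

Lemma Lk_size n M : 0 < n -> M <= size (Lk n M).
Proof.
move=> Hn; elim: M => [//|M IH].
rewrite -addn1 Lk_cat size_cat /= cats0 addn1.
by rewrite -addn1 leq_add // dl_nonempty.
Qed.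

Lemma Lk_nth n M1 M2 i : i < size (Lk n M1) -> i < size (Lk n M2) ->
  nth [::] (Lk n M1) i = nth [::] (Lk n M2) i.
Proof.
wlog le12 : M1 M2 / M1 <= M2.
  move=> W H1 H2; case: (leqP M1 M2) => H; first exact: W.
  by apply/esym/W => //; apply: ltnW.
move=> H1 _; rewrite -(subnKC le12) Lk_cat nth_cat H1 //.
Qed.

Lemma mi_enum_lt n k i : 0 < n -> i < size (Lk n k) -> mi_enum n i = nth [::] (Lk n k) i.
Proof.
move=> Hn Hi; rewrite /mi_enum -/(Lk n i.+1); apply: Lk_nth => //.
exact: leq_trans (Lk_size _ Hn).
Qed.

Lemma mi_enum_big n k i : 0 < n -> size (Lk n k) <= i ->
  size (mi_enum n i) = n /\ k < sumn (mi_enum n i).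
Proof.
move=> Hn Hi.
have Hk : k <= i.+1 by apply: leq_trans (Lk_size _ Hn) _; apply: leq_trans Hi _.
have Hs := Lk_size i.+1 Hn.
rewrite /mi_enum -/(Lk n i.+1).
move: Hs; rewrite -(subnKC Hk) Lk_cat nth_cat ltnNge Hi /= size_cat => Hs.
have Hlt : i - size (Lk n k) < size (flatten [seq deg_list n d | d <- iota k.+1 (i.+1 - k)]).
  by rewrite ltn_subLR //; rewrite (subnKC Hk) in Hs.
by have [-> /andP [H _]] := mem_fl (mem_nth [::] Hlt).
Qed.

Lemma mem_upto n p K : K \in mi_upto n p -> size K = n /\ sumn K <= p.
Proof. by move/mem_fl => [-> /andP [_]]; rewrite add0n ltnS. Qed.

End S2sec.

Lemma nseq0 (J : seq nat) : sumn J = 0%N -> J = nseq (size J) 0%N.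
Proof.
elim: J => [//|x s IH] /= /eqP; rewrite addn_eq0 => /andP [/eqP -> /eqP H].
by rewrite -IH.
Qed.

Lemma mi_le_sumn J K : mi_le J K -> (sumn J <= sumn K)%N.
Proof. by rewrite /mi_le => /orP [/ltnW //| /andP [/eqP -> _]]. Qed.

Lemma big_nat_sub (C : numClosedFieldType) (g : nat -> C) a b a' b' :
  (a' <= a)%N -> (a <= b)%N -> (b <= b')%N ->
  (forall d, (a' <= d < a)%N -> g d = 0) -> (forall d, (b <= d < b')%N -> g d = 0) ->
  \sum_(a <= d < b) g d = \sum_(a' <= d < b') g d.
Proof.
move=> H1 H2 H3 G1 G2.
have H4 := leq_trans H2 H3.
rewrite [RHS](@big_cat_nat _ _ _ a) // [X in _ = _ + X](@big_cat_nat _ _ _ b) //.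
rewrite [X in _ = X + _]big1_seq ?add0r; last first.
  by move=> d /andP [_]; rewrite mem_index_iota => /G1.
rewrite [X in _ = _ + X]big1_seq ?addr0 //.
by move=> d /andP [_]; rewrite mem_index_iota => /G2.
Qed.

Lemma alg4 (C : numClosedFieldType) (x y u v : C) :
  (x + y) * (u + v)^* - (x - y) * (u - v)^* = 2%:R * (x * v^* + y * u^*).
Proof.
rewrite rmorphD rmorphB /= !mulrDl !mulrDr.
rewrite !mulrN !mulNr ?opprK !mul1r.
set A := x * u^*; set B := x * v^*; set E := y * u^*; set D := y * v^*.
rewrite opprD opprB opprD opprK addrACA.
rewrite (addrC A B) -(addrA B A) (addrC A (B - A)) subrK.
by rewrite -(addrA E D) (addrC D (E - D)) subrK addrACA.
Qed.

Lemma sum_eq_count (C : numClosedFieldType) (s : seq (seq nat)) J (f : seq nat -> C) :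
  \sum_(K <- s) (K == J)%:R * f K = (count_mem J s)%:R * f J.
Proof.
elim: s => [|K s IH]; first by rewrite big_nil mul0r.
rewrite big_cons IH /=; case: (eqVneq K J) => [->|Hne] /=.
  by rewrite mul1r natrD mulrDl mul1r.
by rewrite mul0r add0r add0n.
Qed.

Lemma count_upto n J p : size J = n -> count_mem J (mi_upto n p) = (sumn J <= p)%N.
Proof.
move=> HJ; rewrite /mi_upto count_flatten -map_comp.
rewrite (eq_map (g := fun d => ((d == sumn J) * (fun _ => 1%N) d)%N)); last first.
  by move=> d /=; rewrite (dl_count _ HJ) muln1.
by rewrite sumn_iota_eq add0n ltnS muln1.
Qed.

Section Main.
Variables (C : numClosedFieldType) (n : nat) (zeta : 'I_n -> nat -> C) (nu k : nat).
Hypothesis Hz : forall i, vb (zeta i) nu.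
Hypothesis Hnu : (0 < nu)%N.

Local Notation zz := (zpow zeta).

Lemma zz_vanish J p : size J = n -> (p < sumn J * nu)%N -> zz J p = 0.
Proof. by move=> HJ Hp; apply: (zpow_vb Hz HJ). Qed.

Lemma zz_big J p : size J = n -> (p < sumn J)%N -> zz J p = 0.
Proof.
move=> HJ Hp; apply: zz_vanish => //; apply: leq_trans Hp _.
by rewrite leq_pmulr.
Qed.

Lemma zz_zero J p : size J = n -> sumn J = 0%N -> (0 < p)%N -> zz J p = 0.
Proof.
move=> HJ /nseq0 -> Hp; rewrite HJ zpow0 /sone.
by case: p Hp.
Qed.

Lemma sum_upto (F : seq nat -> C) p :
  \sum_(K <- mi_upto n p) F K = \sum_(0 <= d < p.+1) \sum_(K <- deg_list n d) F K.
Proof. by rewrite /mi_upto big_flatten big_map /index_iota subn0. Qed.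

Lemma sum_Lk (F : seq nat -> C) :
  \sum_(J <- Lk n k) F J = \sum_(1 <= d < k.+1) \sum_(J <- deg_list n d) F J.
Proof. by rewrite /Lk big_flatten big_map /index_iota subSS subn0. Qed.

Lemma KL (phi : seq nat -> C) r : (0 < r)%N -> (r <= k * nu)%N ->
  (forall J, size J = n -> zz J r = 0 -> phi J = 0) ->
  \sum_(J <- Lk n k) phi J = \sum_(J <- mi_upto n r) phi J.
Proof.
move=> Hr1 Hr2 Hphi; rewrite sum_Lk sum_upto.
have Z : forall d, (forall J, J \in deg_list n d -> zz J r = 0) ->
    \sum_(J <- deg_list n d) phi J = 0.
  move=> d H; rewrite big1_seq // => J /andP [_ HJ].
  by apply: Hphi (H _ HJ); have [] := dl_mem HJ.
rewrite (@big_nat_sub _ _ 1 k.+1 0 (r + k).+1) //; last 2 first.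
- move=> d /andP [_]; rewrite ltnS leqn0 => /eqP -> ; apply: Z => J /dl_mem [HJ HS].
  exact: zz_zero.
- move=> d /andP [Hd _]; apply: Z => J /dl_mem [HJ HS]; apply: zz_vanish => //.
  rewrite HS; apply: (@leq_trans (k.+1 * nu)); last by rewrite leq_pmul2r.
  by apply: leq_ltn_trans Hr2 _; rewrite ltn_pmul2r.
rewrite [RHS](@big_nat_sub _ _ 0 r.+1 0 (r + k).+1) //.
- by rewrite ltnS leq_addr.
move=> d /andP [Hd _]; apply: Z => J /dl_mem [HJ HS]; apply: zz_big => //.
by rewrite HS.
by rewrite ltnS leq_addl.
Qed.
End Main.

Section Main2.
Variables (C : numClosedFieldType) (n : nat) (zeta : 'I_n -> nat -> C) (nu k : nat).
Hypothesis Hz : forall i, vb (zeta i) nu.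
Hypothesis Hnu : (0 < nu)%N.
Variables (h : seq nat -> C) (a : seq nat -> seq nat -> C).

Local Notation zz := (zpow zeta).

Definition cc J K := if mi_le J K then (a J K)^* else 0.
Definition Wc p J := \sum_(K <- mi_upto n p) cc J K * zz K p.

Lemma Z_eq J p : size J = n -> \sum_(K <- mi_upto n p) (K == J)%:R * zz K p = zz J p.
Proof.
move=> HJ; rewrite sum_eq_count count_upto //.
case: leqP => H; first by rewrite mul1r.
by rewrite mul0r (zz_big Hz Hnu HJ H).
Qed.

Lemma Fc_eq J p : size J = n -> pull1 zeta (fser a J) p = zz J p + Wc p J.
Proof.
move=> HJ; rewrite /pull1 /fser.
under eq_bigr => K _ do rewrite mulrDl.
by rewrite big_split /= Z_eq.
Qed.

Lemma Gc_eq J p : size J = n -> pull1 zeta (gser a J) p = zz J p - Wc p J.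
Proof.
move=> HJ; rewrite /pull1 /gser.
under eq_bigr => K _ do rewrite mulrBl.
by rewrite sumrB Z_eq.
Qed.

Lemma Wc_vanish J p : (p < sumn J * nu)%N -> Wc p J = 0.
Proof.
move=> Hp; rewrite /Wc big1_seq // => K /andP [_ HK].
rewrite /cc; case: ifP => H; last by rewrite mul0r.
have [HKs _] := mem_upto HK.
rewrite (zz_vanish Hz HKs) ?mulr0 //.
by apply: leq_trans Hp _; rewrite leq_mul2r (mi_le_sumn H) orbT.
Qed.

Lemma FG_vanish J p : size J = n -> (p < sumn J * nu)%N ->
  pull1 zeta (fser a J) p = 0 /\ pull1 zeta (gser a J) p = 0.
Proof.
move=> HJ Hp; rewrite Fc_eq // Gc_eq // Wc_vanish // (zz_vanish Hz HJ Hp).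
by rewrite addr0 subr0.
Qed.

Definition t1 p q J K := (if mi_le J K then a J K else 0) * zz J p * (zz K q)^*.
Definition t2 p q J K := (if mi_le K J then (a K J)^* else 0) * zz J p * (zz K q)^*.

Lemma term p q J K : (0 < p)%N -> (0 < q)%N -> size J = n -> size K = n ->
  rser h a J K * zz J p * (zz K q)^* = 2%:R * (t1 p q J K + t2 p q J K).
Proof.
move=> Hp Hq HJ HK; rewrite /t1 /t2.
case: (eqVneq (sumn J) 0%N) => HJ0.
  by rewrite (zz_zero zeta HJ HJ0 Hp) !(mulr0, mul0r, addr0).
case: (eqVneq (sumn K) 0%N) => HK0.
  by rewrite (zz_zero zeta HK HK0 Hq) rmorph0 !(mulr0, mul0r, addr0).
rewrite /rser (negbTE HJ0) (negbTE HK0) /= !add0r.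
by rewrite -mulrDr -!mulrA -mulrDl.
Qed.

Lemma pull2_dec p q : (0 < p)%N -> (0 < q)%N ->
  pull2 zeta (rser h a) p q =
  2%:R * (\sum_(J <- mi_upto n p) \sum_(K <- mi_upto n q) t1 p q J K
        + \sum_(J <- mi_upto n p) \sum_(K <- mi_upto n q) t2 p q J K).
Proof.
move=> Hp Hq; rewrite -big_split mulr_sumr /pull2.
apply: eq_big_seq => J HJ; rewrite -big_split mulr_sumr.
apply: eq_big_seq => K HK /=.
by rewrite term //; [case: (mem_upto HJ) | case: (mem_upto HK)].
Qed.

Lemma gram p q : (0 < p)%N -> (0 < q)%N -> (p <= k * nu)%N -> (q <= k * nu)%N ->
  \sum_(J <- Lk n k) (pull1 zeta (fser a J) p * (pull1 zeta (fser a J) q)^*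
                    - pull1 zeta (gser a J) p * (pull1 zeta (gser a J) q)^*)
  = pull2 zeta (rser h a) p q.
Proof.
move=> Hp Hq Hpk Hqk; rewrite pull2_dec //.
rewrite (eq_big_seq (fun J => 2%:R * (zz J p * (Wc q J)^* + Wc p J * (zz J q)^*)));
  last first.
  move=> J /mem_fl [HJ _]; by rewrite Fc_eq // Fc_eq // Gc_eq // Gc_eq // alg4.
rewrite -mulr_sumr big_split /=; congr (_ * (_ + _)).
  rewrite (KL Hz Hnu (r := p)) //; last first.
    by move=> J _ ->; rewrite mul0r.
  apply: eq_big_seq => J HJ; rewrite /Wc rmorph_sum mulr_sumr.
  apply: eq_bigr => K _; rewrite /t1 /cc rmorphM /=.
  rewrite (fun_if (@Num.conj C)) conjCK rmorph0 mulrCA mulrA //.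
rewrite (KL Hz Hnu (r := q)) //; last first.
  by move=> J _ ->; rewrite rmorph0 mulr0.
rewrite exchange_big /=.
apply: eq_big_seq => J HJ; rewrite /Wc mulr_suml.
  by apply: eq_bigr => K _; rewrite /t2 /cc.
Qed.
End Main2.

Section LA.
Local Open Scope sesquilinear_scope.
Variable C : numClosedFieldType.

Lemma trC_mul m n p (X : 'M[C]_(m, n)) (Y : 'M[C]_(n, p)) :
  (X *m Y)^t* = Y^t* *m X^t*.
Proof. by rewrite trmx_mul map_mxM. Qed.

Lemma MMt0 m n (M : 'M[C]_(m, n)) : M *m M^t* = 0 -> M = 0.
Proof.
move=> H; apply/matrixP => i j; rewrite mxE.
have := congr1 (fun X : 'M[C]_m => X i i) H; rewrite !mxE => /eqP.
rewrite psumr_eq0 => [/allP /(_ j (mem_index_enum _)) /=|k _].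
  by rewrite !mxE mul_conjC_eq0 => /eqP.
by rewrite !mxE mul_conjC_ge0.
Qed.

Lemma gram_trans P N r (A B : 'M[C]_(P, N)) (Y : 'M[C]_(r, P)) :
  A *m A^t* = B *m B^t* -> Y *m B = 0 -> Y *m A = 0.
Proof.
move=> HAB HY; apply: MMt0.
by rewrite trC_mul mulmxA -(mulmxA Y) HAB mulmxA -mulmxA -trC_mul HY mul0mx.
Qed.

Lemma cast_unit_ex m1 m2 r N (Q : 'M[C]_(r, N)) (K : 'M[C]_(m1, N)) :
  m1 = m2 -> K \is unitarymx -> Q *m K^t* = 0 ->
  exists K' : 'M[C]_(m2, N), K' \is unitarymx /\ Q *m K'^t* = 0 /\ K' *m Q^t* = 0.
Proof.
move=> e; case: _ / e => KU QK; exists K; split => //; split => //.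
by rewrite -[K](trmxCK) -trC_mul QK; apply/matrixP => i j; rewrite !mxE rmorph0.
Qed.

Lemma complete_unitary r N (Q : 'M[C]_(r, N)) : Q \is unitarymx ->
  exists K : 'M[C]_(N - r, N), col_mx Q K \is unitarymx.
Proof.
move=> QU.
set Qo := kermx (map_mx Num.conj (1%:M *m Q^T)).
pose K0 := schmidt (row_base Qo).
have K0U : K0 \is unitarymx by apply: schmidt_unitarymx; rewrite rank_leq_col.
have K0E : (K0 :=: Qo)%MS.
  exact: (eqmx_trans (eqmx_schmidt_free (row_base_free Qo)) (eq_row_base Qo)).
have rk : \rank Qo = (N - r)%N.
  by rewrite mxrank_ker mul1mx mxrank_map mxrank_tr mxrank_unitary.
have QK0 : Q *m K0^t* = 0.
  have : (K0 <= Qo)%MS by rewrite K0E.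
  move/sub_kermxP; rewrite mul1mx => H.
  rewrite -[Q]trmxCK -trC_mul.
  suff -> : K0 *m Q^t* = 0 by apply/matrixP => i j; rewrite !mxE rmorph0.
  by [].
have [K [KU [QK KQ]]] := @cast_unit_ex _ _ _ _ Q K0 rk K0U QK0.
exists K; apply/unitarymxP; rewrite tr_col_mx map_row_mx mul_col_row.
rewrite !(unitarymxP _) // QK KQ.
by rewrite -scalar_mx_block.
Qed.
Lemma iso_ext P N (A B : 'M[C]_(P, N)) : A *m A^t* = B *m B^t* ->
  exists V : 'M[C]_N, V \is unitarymx /\ B *m V = A.
Proof.
move=> HAB.
pose QB := schmidt (row_base B).
have QBU : QB \is unitarymx by apply: schmidt_unitarymx; rewrite rank_leq_col.
have QBE : (QB :=: B)%MS.
  exact: (eqmx_trans (eqmx_schmidt_free (row_base_free B)) (eq_row_base B)).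
pose X := B *m pinvmx QB.
have BX : B = X *m QB by rewrite /X mulmxKpV // QBE.
pose Y := QB *m pinvmx B.
have QY : QB = Y *m B by rewrite /Y mulmxKpV // QBE.
pose QA := Y *m A.
have QAU : QA \is unitarymx.
  apply/unitarymxP; rewrite /QA trC_mul mulmxA -(mulmxA Y) HAB mulmxA.
  by rewrite -mulmxA -trC_mul -QY (unitarymxP _).
have XQA : X *m QA = A.
  have H0 : (X *m Y - 1%:M) *m B = 0.
    by rewrite mulmxBl -mulmxA -QY -BX mul1mx subrr.
  have := gram_trans HAB H0.
  by rewrite mulmxBl mul1mx /QA mulmxA => /eqP; rewrite subr_eq0 => /eqP.
have rN : (\rank B <= N)%N by rewrite rank_leq_col.
have [KB WBU] := complete_unitary QBU.
have [KA WAU] := complete_unitary QAU.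
exists ((col_mx QB KB)^t* *m col_mx QA KA); split.
  apply/unitarymxP; set WB := col_mx QB KB; set WA := col_mx QA KA.
  rewrite trC_mul trmxCK mulmxA -(mulmxA (WB^t*)) (unitarymxP WAU) mulmx1.
  have := @mulmxKtV _ _ _ _ 1%:M _ WBU (subnKC rN).
  by rewrite mul1mx.
transitivity (X *m QB *m ((col_mx QB KB)^t* *m col_mx QA KA)).
  by rewrite -BX.
rewrite -mulmxA (mulmxA QB).
have -> : QB *m (col_mx QB KB)^t* = row_mx 1%:M 0.
  rewrite tr_col_mx map_row_mx mul_mx_row (unitarymxP _) //.
  have := WBU; move/unitarymxP; rewrite tr_col_mx map_row_mx mul_col_row.
  rewrite scalar_mx_block => /eq_block_mx [_ -> _ _] //.
by rewrite mul_row_col mul1mx mul0mx addr0.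
Qed.
End LA.


Section Ext.
Variables (C : numClosedFieldType) (N : nat).

Definition extU (W : 'M[C]_N) : nat -> nat -> C := fun i m =>
  match (insub i : option 'I_N), (insub m : option 'I_N) with
  | Some i', Some m' => W i' m'
  | _, _ => (i == m)%:R
  end.

Lemma extU_in W (i m : 'I_N) : extU W i m = W i m.
Proof. by rewrite /extU !valK. Qed.

Lemma extU_out W i m : (N <= i)%N || (N <= m)%N -> extU W i m = (i == m)%:R.
Proof.
rewrite /extU => /orP [H|H].
  by rewrite (insubF _ (negbTE _)) // -leqNgt.
by case: (insub i) => // i'; rewrite (insubF _ (negbTE _)) // -leqNgt.
Qed.

Lemma extU_tr W i m : extU W^T m i = extU W i m.
Proof.
rewrite /extU; case: (insub i) => [i'|]; case: (insub m) => [m'|] //;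
  by rewrite ?mxE // eq_sym.
Qed.

Lemma delta_sum M i (g : nat -> C) : (i < M)%N -> \sum_(m < M) (i == m)%:R * g m = g i.
Proof.
move=> Hi; rewrite (bigD1 (Ordinal Hi)) //= eqxx mul1r big1 ?addr0 // => m Hm.
suff -> : (i == m) = false by rewrite mul0r.
apply/negbTE; apply: contra Hm => /eqP H; apply/eqP/val_inj => /=.
by rewrite H.
Qed.

Lemma extU_sum W M i l : W *m map_mx Num.conj W^T = 1%:M -> (N <= M)%N -> (i < M)%N -> (l < M)%N ->
  \sum_(m < M) extU W i m * (extU W l m)^* = (i == l)%:R.
Proof.
move=> WU HNM HiM HlM.
case: (leqP N i) => HiN.
  under eq_bigr => m _ do rewrite (extU_out W (m:=m) (i:=i)) ?HiN //.
  rewrite (delta_sum (fun m => (extU W l m)^*)) // extU_out ?HiN ?orbT //. 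
  by rewrite conjC_nat eq_sym.
case: (leqP N l) => HlN.
  under eq_bigr => m _ do rewrite (extU_out W (m:=m) (i:=l)) ?HlN // conjC_nat mulrC.
  by rewrite (delta_sum (fun m => extU W i m)) // extU_out ?HlN ?orbT // eq_sym.
rewrite (bigID (fun m : 'I_M => (m < N)%N)) /= [X in _ + X]big1 ?addr0; last first.
  move=> m; rewrite -leqNgt => Hm.
  rewrite (extU_out W (i:=i)) ?Hm ?orbT // (_ : (i == m) = false) ?mul0r //.
  by apply/negbTE; rewrite neq_ltn (leq_trans HiN Hm).
rewrite -(big_ord_widen _ (fun m => extU W i m * (extU W l m)^*) HNM).
have := congr1 (fun X : 'M[C]_N => X (Ordinal HiN) (Ordinal HlN)) WU.
rewrite !mxE /= => <-; apply: eq_bigr => m _.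
by rewrite (extU_in W (Ordinal HiN) m) (extU_in W (Ordinal HlN) m) !mxE.
Qed.
End Ext.

Lemma sumn_nseq0 m : sumn (nseq m 0%N) = 0%N.
Proof. by elim: m. Qed.

Lemma pull2_p0 (C : numClosedFieldType) n (zeta : 'I_n -> nat -> C) h a p :
  h (nseq n 0%N) = 0 -> pull2 zeta (rser h a) p 0 = pull1 zeta h p.
Proof.
move=> Hh; rewrite /pull2 /pull1.
have -> : mi_upto n 0 = [:: nseq n 0%N] by rewrite /mi_upto /= dl0.
apply: eq_bigr => J _; rewrite big_seq1 zpow0 /sone /= rmorph1 mulr1.
by rewrite /rser sumn_nseq0 /= Hh rmorph0 if_same andbF !addr0.
Qed.

Lemma pull1_fUg (C : numClosedFieldType) n (zeta : 'I_n -> nat -> C) a N U i p :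
  pull1 zeta (fUg n a N U i) p = pull1 zeta (fser a (mi_enum n i)) p
   - \sum_(m < maxn N i.+1) U i m * pull1 zeta (gser a (mi_enum n m)) p.
Proof.
rewrite /pull1 /fUg.
under eq_bigr => K _ do rewrite mulrBl.
rewrite sumrB; congr (_ - _).
under eq_bigr => K _ do rewrite mulr_suml.
rewrite exchange_big; apply: eq_bigr => m _; rewrite mulr_sumr.
by apply: eq_bigr => K _; rewrite mulrA.
Qed.

Unset Implicit Arguments.
Theorem mainTheorem3 (C : numClosedFieldType) (n : nat)
    (h : seq nat -> C) (a : seq nat -> seq nat -> C)
    (zeta : 'I_n -> nat -> C) (nu k : nat) :
  (* h(0) = 0, hence r(0) = 0 *)
  h (nseq n 0%N) = 0 ->
  (* dr(0) <> 0 : some first-order Taylor coefficient of r is nonzero *)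
  (exists J K : seq nat, size J = n /\ size K = n /\ (sumn J + sumn K = 1)%N
                         /\ rser h a J K != 0) ->
  (* zeta(0) = 0 and zeta nonconstant *)
  (forall i, zeta i 0%N = 0) ->
  (exists i p, zeta i p != 0) ->
  vanishing_order zeta nu ->
  (1 <= k)%N ->
  (* j_{2 k nu}(zeta^* r) = 0 *)
  (forall p q, (p + q <= 2 * k * nu)%N -> pull2 zeta (rser h a) p q = 0) ->
  exists (N : nat) (U : inf_matrix C),
    in_M1N N U
    /\ (forall p, (p <= 2 * k * nu)%N -> pull1 zeta h p = 0)
    /\ (forall i p, (p <= k * nu)%N -> pull1 zeta (fUg n a N U i) p = 0).
Proof.
move=> Hh0 _ Hz0 _ [[i0 Hi0] Hvb] Hk Hr.
have Hn : (0 < n)%N := leq_ltn_trans (leq0n _) (ltn_ord i0).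
have Hnu : (0 < nu)%N.
  by case: (posnP nu) => // E; move: Hi0; rewrite E Hz0 eqxx.
have Hz : forall i, vb (zeta i) nu by move=> i p Hp; apply: Hvb.
have H2D : (2 * k * nu = k * nu + k * nu)%N by rewrite -mulnA mul2n addnn.
set D := (k * nu)%N in H2D *.
set E := Lk n k.
set N := size E.
pose Fm := \matrix_(i < N, j < D.+1) pull1 zeta (fser a (nth [::] E i)) j.
pose Gm := \matrix_(i < N, j < D.+1) pull1 zeta (gser a (nth [::] E i)) j.
have memE : forall J, J \in E -> size J = n /\ (0 < sumn J)%N.
  by move=> J /mem_fl [-> /andP [H _]].
have HAB : Fm^T *m map_mx Num.conj (Fm^T)^T = Gm^T *m map_mx Num.conj (Gm^T)^T.
  apply/matrixP => p q; rewrite !mxE.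
  have Hs : forall (Q : seq nat -> C),
      \sum_(j < N) Q (nth [::] E j) = \sum_(J <- E) Q J.
    by move=> Q; rewrite (big_nth [::]) big_mkord.
  transitivity (\sum_(J <- E) pull1 zeta (fser a J) p * (pull1 zeta (fser a J) q)^*).
    by rewrite -Hs; apply: eq_bigr => j _; rewrite !mxE.
  transitivity (\sum_(J <- E) pull1 zeta (gser a J) p * (pull1 zeta (gser a J) q)^*);
    last by rewrite -Hs; apply: eq_bigr => j _; rewrite !mxE.
  apply/eqP; rewrite -subr_eq0 -sumrB; apply/eqP.
  have Hp : (p <= D)%N by rewrite -ltnS ltn_ord.
  have Hq : (q <= D)%N by rewrite -ltnS ltn_ord.
  case: (posnP p) => [p0|pp].
    rewrite big1_seq // => J /andP [_ /memE [HJ HS]].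
    have H0 : (p < sumn J * nu)%N by rewrite p0 muln_gt0 HS.
    by have [-> ->] := FG_vanish Hz Hnu a HJ H0; rewrite !mul0r subrr.
  case: (posnP q) => [q0|qq].
    rewrite big1_seq // => J /andP [_ /memE [HJ HS]].
    have H0 : (q < sumn J * nu)%N by rewrite q0 muln_gt0 HS.
    by have [-> ->] := FG_vanish Hz Hnu a HJ H0; rewrite rmorph0 !mulr0 subrr.
  rewrite (gram Hz Hnu h a pp qq Hp Hq).
  by apply: Hr; rewrite H2D leq_add.
have [V [VU BV]] := iso_ext HAB.
have VTU : V^T \is unitarymx by rewrite trmx_unitary.
exists N, (extU V^T); split; [split; [|split]|split].
- move=> i j; rewrite leq_max => H; exact: extU_out.
- move=> i l; apply: extU_sum; first exact/unitarymxP.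
  + exact: leq_maxl.
  + by rewrite leq_max ltnS leq_maxl orbT.
  + by rewrite leq_max ltnS leq_maxr orbT.
- move=> i l.
  under eq_bigr => m _ do rewrite !extU_tr mulrC.
  rewrite extU_sum; first by rewrite eq_sym.
  + exact/unitarymxP.
  + exact: leq_maxl.
  + by rewrite leq_max ltnS leq_maxr orbT.
  + by rewrite leq_max ltnS leq_maxl orbT.
- move=> p Hp; rewrite -(pull2_p0 zeta a p Hh0); apply: Hr.
  by rewrite addn0.
move=> i p Hp; rewrite pull1_fUg.
case: (ltnP i N) => Hi.
  rewrite (maxn_idPl Hi) (mi_enum_lt Hn Hi).
  have HpD : (p < D.+1)%N by rewrite ltnS.
  have := congr1 (fun X : 'M[C]_(D.+1, N) => X (Ordinal HpD) (Ordinal Hi)) BV.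
  rewrite !mxE => <-.
  apply/eqP; rewrite subr_eq0; apply/eqP; apply: eq_bigr => m _.
  rewrite !mxE (mi_enum_lt Hn (ltn_ord m)) (extU_in V^T (Ordinal Hi) m) mxE.
  by rewrite mulrC.
rewrite (maxn_idPr (leqW Hi)).
under eq_bigr => m _ do rewrite extU_out ?Hi //.
rewrite (delta_sum (fun m => pull1 zeta (gser a (mi_enum n m)) p)) //.
have [Hs Hk'] := mi_enum_big Hn Hi.
have H0 : (p < sumn (mi_enum n i) * nu)%N.
  apply: leq_ltn_trans Hp _; apply: (@leq_trans (k.+1 * nu)).
    by rewrite ltn_pmul2r.
  by rewrite leq_pmul2r.
by have [-> ->] := FG_vanish Hz Hnu a Hs H0; rewrite subrr.
Qed.
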